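(* Let $P$ be a set of $n\geq 5$ points in general position in the plane such that exactly $5$ points of $P$ lie on the boundary of the convex hull of $P$. Then $\mu(D(P))\geq\binom{n}{2}-9$.
   Context: General position means no three points collinear. $D(P)$ is the graph whose vertices are all closed segments with both endpoints in $P$, two adjacent iff disjoint. For a graph $G$ and $U\subseteq V(G)$, two distinct vertices $x,y\in U$ are $U$-mutually visible if $G$ contains a shortest $x$-$y$ path none of whose internal vertices lies in $U$; $U$ is a mutual-visibility set if every two distinct vertices of $U$ are $U$-mutually visible. $\mu(G)$ is the maximum size of a mutual-visibility set of $G$. *)

(* Defs.v *)
From HB Require Import structures.
From mathcomp Require Import all_boot all_order all_algebra.
From mathcomp Require Import boolp reals.
Set Implicit Arguments. Unset Strict Implicit. Unset Printing Implicit Defensive.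
Import Order.TTheory GRing.Theory Num.Theory.
Local Open Scope ring_scope.

Definition collinear (R : realType) (a b c : R * R) : Prop :=
  (b.1 - a.1) * (c.2 - a.2) - (b.2 - a.2) * (c.1 - a.1) = 0.

Definition general_position (R : realType) (n : nat) (p : 'I_n -> R * R) : Prop :=
  forall i j k : 'I_n, i != j -> j != k -> i != k -> ~ collinear (p i) (p j) (p k).

Definition in_hull (R : realType) (n : nat) (p : 'I_n -> R * R) (x : R * R) : Prop :=
  exists w : 'I_n -> R, (forall i, 0 <= w i) /\ \sum_i w i = 1 /\
    x = (\sum_i w i * (p i).1, \sum_i w i * (p i).2).

(* x lies on the (topological) boundary of the convex hull of P
   (the hull is closed, so boundary = hull minus interior) *)
Definition on_hull_boundary (R : realType) (n : nat) (p : 'I_n -> R * R)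
    (x : R * R) : Prop :=
  in_hull p x /\
  forall eps : R, 0 < eps -> exists y : R * R,
    (y.1 - x.1) ^+ 2 + (y.2 - x.2) ^+ 2 < eps ^+ 2 /\ ~ in_hull p y.

Definition on_seg (R : realType) (a b z : R * R) : Prop :=
  exists t : R, 0 <= t <= 1 /\
    z = ((1 - t) * a.1 + t * b.1, (1 - t) * a.2 + t * b.2).

(* vertices: segments with both endpoints in P, i.e. 2-subsets of indices *)
Definition seg (n : nat) := {s : {set 'I_n} | #|s| == 2%N}.

Definition seg_pt (R : realType) (n : nat) (p : 'I_n -> R * R) (s : seg n)
    (z : R * R) : Prop :=
  exists i j : 'I_n, [/\ i \in val s, j \in val s, i != j & on_seg (p i) (p j) z].

Definition D_adj (R : realType) (n : nat) (p : 'I_n -> R * R) (s1 s2 : seg n) : Prop :=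
  ~ exists z, seg_pt p s1 z /\ seg_pt p s2 z.

Definition D_rel (R : realType) (n : nat) (p : 'I_n -> R * R) : rel (seg n) :=
  fun s1 s2 => `[< D_adj p s1 s2 >].

(* walk x :: s from x to y *)
Definition is_walk (V : finType) (e : rel V) (x y : V) (s : seq V) : bool :=
  path e x s && (last x s == y).

Definition shortest_path (V : finType) (e : rel V) (x y : V) (s : seq V) : Prop :=
  is_walk e x y s /\ forall s', is_walk e x y s' -> (size s <= size s')%N.

Definition internal (V : finType) (x : V) (s : seq V) : seq V := behead (belast x s).

Definition mutually_visible (V : finType) (e : rel V) (U : {set V}) (x y : V) : Prop :=
  exists s, shortest_path e x y s /\ forall v, v \in internal x s -> v \notin U.

Definition mv_set (V : finType) (e : rel V) (U : {set V}) : Prop :=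
  forall x y, x \in U -> y \in U -> x != y -> mutually_visible e U x y.

Definition mu (V : finType) (e : rel V) : nat :=
  \max_(U : {set V} | `[< mv_set e U >]) #|U|.

(* Main.v *)
Require Import Defs.
From HB Require Import structures.
From mathcomp Require Import all_boot all_order all_algebra.
From mathcomp Require Import boolp reals.
From mathcomp Require Import ring lra.
Set Implicit Arguments. Unset Strict Implicit. Unset Printing Implicit Defensive.
Import Order.TTheory GRing.Theory Num.Theory.
Local Open Scope ring_scope.
Section Geo.
Variable R : realType.
Implicit Types a b c d x y z : R * R.

Definition O a b c : R := (b.1 - a.1) * (c.2 - a.2) - (b.2 - a.2) * (c.1 - a.1).

Lemma O_aab a c : O a c a = 0. Proof. rewrite /O; ring. Qed.
Lemma O_abb a c : O a c c = 0. Proof. rewrite /O; ring. Qed.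

Lemma O_cyc a b c : O a b c = O b c a.
Proof. rewrite /O; ring. Qed.
Lemma O_swap a b c : O a b c = - O b a c.
Proof. rewrite /O; ring. Qed.
Lemma O_swap2 a b c : O a b c = - O a c b.
Proof. rewrite /O; ring. Qed.

Definition cmb (t : R) a b : R * R := ((1 - t) * a.1 + t * b.1, (1 - t) * a.2 + t * b.2).

Lemma O_cmb a b c d t : O a b (cmb t c d) = (1 - t) * O a b c + t * O a b d.
Proof. rewrite /O /cmb /=; ring. Qed.

Lemma O_cmb_col c d t : O (cmb t c d) c d = 0.
Proof. rewrite /O /cmb /=; ring. Qed.

Lemma on_segE a b z : on_seg a b z <-> exists t, 0 <= t <= 1 /\ z = cmb t a b.
Proof. by []. Qed.

Lemma on_seg_sym a b z : on_seg a b z -> on_seg b a z.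
Proof.
case=> t [/andP[t0 t1] ->]; exists (1 - t); split.
  by apply/andP; split; lra.
by rewrite /cmb; congr (_, _); ring.
Qed.

Lemma SL1 A B a b c d : O A B a = 0 -> O A B b = 0 -> 0 < O A B c -> 0 < O A B d ->
  forall z, on_seg a b z -> on_seg c d z -> False.
Proof.
move=> ha hb hc hd z [t [/andP[t0 t1] ->]] [u [/andP[u0 u1]]].
move/(congr1 (O A B)); rewrite !O_cmb ha hb !mulr0 addr0 => h.
have : 0 < (1 - u) * O A B c + u * O A B d.
  have [->|u1'] := eqVneq u 1.
    by rewrite subrr mul0r add0r mul1r.
  have : 0 < 1 - u by rewrite subr_gt0 lt_neqAle u1' u1.
  move=> h1; apply: ltr_pwDl; first exact: mulr_gt0.
  exact: mulr_ge0 (ltW hd).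
by rewrite -h ltxx.
Qed.

Lemma SL2 A B a b c d : O A B a < O A B b -> O A B b <= O A B c -> O A B b <= O A B d ->
  O b c d != 0 ->
  forall z, on_seg a b z -> on_seg c d z -> False.
Proof.
move=> hab hc hd hcol z [t [/andP[t0 t1] ezt]] [u [/andP[u0 u1] ezu]].
have e1 : O A B z = (1 - t) * O A B a + t * O A B b by rewrite ezt O_cmb.
have e2 : O A B z = (1 - u) * O A B c + u * O A B d by rewrite ezu O_cmb.
have h2 : O A B b <= O A B z.
  rewrite e2.
  have -> : O A B b = (1 - u) * O A B b + u * O A B b by ring.
  by apply: lerD; apply: ler_wpM2l => //; lra.
have ht : t = 1.
  apply/eqP; rewrite eq_le t1 /=.
  rewrite leNgt; apply/negP => tlt.
  have : (1 - t) * O A B a + t * O A B b < O A B b.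
    have -> : (1 - t) * O A B a + t * O A B b = O A B b - (1 - t) * (O A B b - O A B a) by ring.
    rewrite ltrBlDr ltrDl; apply: mulr_gt0; lra.
  by rewrite -e1 => /(le_lt_trans h2); rewrite ltxx.
have zb : z = b by rewrite ezt ht /cmb subrr !mul0r !add0r !mul1r; case: (b).
by move: hcol; rewrite -zb ezu O_cmb_col eqxx.
Qed.

End Geo.
Section Graph.
Variable V : finType.
Variable e : rel V.

Lemma mv_from (W : {set V}) :
  (forall s t, s \notin W -> t \notin W -> s != t ->
     e s t \/ exists2 w, w \in W & e s w /\ e w t) ->
  mv_set e (~: W).
Proof.
move=> H x y; rewrite !inE => xW yW xy.
case exy: (e x y).
  exists [:: y]; split; last by [].
  split; first by rewrite /is_walk /= exy eqxx.
  case=> [|z s'] //=; rewrite /is_walk /= => /eqP xy'.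
  by move: xy; rewrite xy' eqxx.
case: (H x y xW yW xy) => [exy' | [w wW [exw ewy]]]; first by rewrite exy' in exy.
exists [:: w; y]; split; last first.
  by move=> v; rewrite /internal /= inE => /eqP ->; rewrite inE negbK.
split; first by rewrite /is_walk /= exw ewy eqxx.
case=> [|z [|z' s']] //=; rewrite /is_walk /=.
- by move=> /eqP xy'; move: xy; rewrite xy' eqxx.
- by move=> /andP[/andP[exz _] /eqP zy]; rewrite -zy exz in exy.
Qed.

Lemma mu_ge (W : {set V}) : mv_set e (~: W) -> (#|V| - #|W| <= mu e)%N.
Proof.
move=> h; rewrite /mu.
have -> : (#|V| - #|W| = #|~: W|)%N by rewrite (cardsCs (~: W)) setCK.
exact: (@leq_bigmax_cond _ (fun U => `[< mv_set e U >]) (fun U => #|U|) (~: W) (asboolT h)).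
Qed.
End Graph.
Section Segs.
Variable R : realType.
Variable n : nat.
Variable p : 'I_n -> R * R.

Lemma seg_ends (s : seg n) : exists i j, i != j /\ val s = [set i; j].
Proof.
case: s => S /= /cards2P [i [j [ij ->]]]; by exists i, j.
Qed.

Lemma mkseg (i j : 'I_n) : i != j -> {w : seg n | val w = [set i; j]}.
Proof.
move=> ij.
have h : #|[set i; j]| == 2 by rewrite cards2 ij.
by exists (exist _ [set i; j] h).
Qed.

Lemma seg_ptE (s : seg n) i j z : i != j -> val s = [set i; j] ->
  seg_pt p s z <-> on_seg (p i) (p j) z.
Proof.
move=> ij es; split.
  case=> [i' [j' []]]; rewrite es !inE => /orP[]/eqP-> /orP[]/eqP->.
  - by rewrite eqxx.
  - by [].
  - by move=> _ /on_seg_sym.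
  - by rewrite eqxx.
move=> h; exists i, j; split => //; rewrite es !inE eqxx ?orbT //.
Qed.

Lemma adj_of (s t : seg n) i j k l : i != j -> val s = [set i; j] ->
  k != l -> val t = [set k; l] ->
  (forall z, on_seg (p i) (p j) z -> on_seg (p k) (p l) z -> False) ->
  D_rel p s t.
Proof.
move=> ij es kl et H; apply/asboolP => -[z [h1 h2]].
move: h1 h2; rewrite (seg_ptE z ij es) (seg_ptE z kl et); exact: H.
Qed.

Lemma D_rel_sym (s t : seg n) : D_rel p s t -> D_rel p t s.
Proof.
move=> /asboolP h; apply/asboolP => -[z [h1 h2]]; apply: h; by exists z.
Qed.

Definition Sep (i j : 'I_n) (X : {set 'I_n}) :=
  forall k l, k != l -> k \notin X -> l \notin X ->
    forall z, on_seg (p i) (p j) z -> on_seg (p k) (p l) z -> False.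

Lemma rescue (w s : seg n) i j X : i != j -> val w = [set i; j] -> Sep i j X ->
  [disjoint val s & X] -> D_rel p s w /\ D_rel p w s.
Proof.
move=> ij ew hS dis.
have [k [l [kl es]]] := seg_ends s.
have kX : k \notin X by rewrite (disjointFr dis) // es !inE eqxx.
have lX : l \notin X by rewrite (disjointFr dis) // es !inE eqxx orbT.
have h : D_rel p w s.
  by apply: (adj_of ij ew kl es) => z h1 h2; apply: (hS k l kl kX lX z h1 h2).
by split => //; apply: D_rel_sym.
Qed.

End Segs.
Definition sh (k : 'I_5) (m : nat) : 'I_5 := Ordinal (ltn_pmod (k + m) (isT : (0 < 5)%N)).
Ltac c5 k := case: k => [[|[|[|[|[|?]]]]] ?] //.

Lemma sh41 v : sh (sh v 4) 1 = v. Proof. by apply/val_inj; c5 v. Qed.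
Lemma sh11 v : sh (sh v 1) 1 = sh v 2. Proof. by apply/val_inj; c5 v. Qed.
Lemma sh21 v : sh (sh v 2) 1 = sh v 3. Proof. by apply/val_inj; c5 v. Qed.
Lemma sh31 v : sh (sh v 3) 1 = sh v 4. Proof. by apply/val_inj; c5 v. Qed.
Lemma sh24 v : sh (sh v 2) 4 = sh v 1. Proof. by apply/val_inj; c5 v. Qed.
Lemma sh14 v : sh (sh v 1) 4 = v. Proof. by apply/val_inj; c5 v. Qed.
Lemma sh1n v : sh v 1 != v. Proof. by c5 v. Qed.
Lemma sh4n v : sh v 4 != v. Proof. by c5 v. Qed.
Lemma sh2n v : sh v 2 != v. Proof. by c5 v. Qed.
Lemma sh3n v : sh v 3 != v. Proof. by c5 v. Qed.
Lemma sh41n v : sh v 4 != sh v 1. Proof. by c5 v. Qed.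
Lemma sh42n v : sh v 4 != sh v 2. Proof. by c5 v. Qed.
Lemma sh43n v : sh v 4 != sh v 3. Proof. by c5 v. Qed.
Lemma sh12n v : sh v 1 != sh v 2. Proof. by c5 v. Qed.
Lemma sh13n v : sh v 1 != sh v 3. Proof. by c5 v. Qed.
Lemma sh23n v : sh v 2 != sh v 3. Proof. by c5 v. Qed.
Ltac shne0 := first [exact: sh1n | exact: sh2n | exact: sh3n | exact: sh4n | exact: sh41n | exact: sh42n | exact: sh43n | exact: sh12n | exact: sh13n | exact: sh23n].
Ltac shne := first [shne0 | rewrite eq_sym; shne0].

Lemma sh_all k v : [|| k == sh v 4, k == v, k == sh v 1, k == sh v 2 | k == sh v 3].
Proof. by c5 k; c5 v. Qed.
Lemma sh_pair k l : k != l -> [|| l == sh k 1, k == sh l 1, l == sh k 2 | k == sh l 2].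
Proof. by c5 k; c5 l. Qed.
Lemma sh_avoid k1 k2 : exists k, [&& k != k1, k != k2, sh k 1 != k1 & sh k 1 != k2].
Proof.
c5 k1; c5 k2.
all: first [ by exists (@Ordinal 5 0 isT) | by exists (@Ordinal 5 1 isT) | by exists (@Ordinal 5 2 isT) | by exists (@Ordinal 5 3 isT) | by exists (@Ordinal 5 4 isT) ].
Qed.

Section Main.
Variable R : realType.
Variable n : nat.
Variable p : 'I_n -> R * R.
Hypothesis gp : general_position p.
Variable b : 'I_5 -> 'I_n.
Hypothesis binj : injective b.
Hypothesis E : forall k x, x != b k -> x != b (sh k 1) ->
  0 < O (p (b k)) (p (b (sh k 1))) (p x).

Lemma gpO i j k : i != j -> j != k -> i != k -> O (p i) (p j) (p k) != 0.
Proof. by move=> ij jk ik; apply/eqP => h; apply: (gp ij jk ik). Qed.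

Lemma bne k l : k != l -> b k != b l.
Proof. by rewrite (inj_eq binj). Qed.


Lemma E0 k x : 0 <= O (p (b k)) (p (b (sh k 1))) (p x).
Proof.
have [->|h1] := eqVneq x (b k); first by rewrite O_aab.
have [->|h2] := eqVneq x (b (sh k 1)); first by rewrite O_abb.
exact/ltW/E.
Qed.

Definition h v x := O (p (b (sh v 4))) (p (b (sh v 1))) (p x).

Lemma O_decomp (a bb c x : R * R) : O a c x = O a bb x + O bb c x - O a bb c.
Proof. rewrite /O; ring. Qed.

Lemma hv_min v x : x != b v -> h v (b v) < h v x.
Proof.
move=> xv; rewrite /h.
set a := p (b (sh v 4)); set bb := p (b v); set c := p (b (sh v 1)).
rewrite (O_decomp a bb c (p x)) (O_decomp a bb c bb) O_abb add0r O_aab add0r.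
have e1 : 0 <= O a bb (p x) by rewrite /a /bb -{2}(sh41 v); apply: E0.
have e2 : 0 <= O bb c (p x) by apply: E0.
have [exa|xa] := eqVneq x (b (sh v 4)).
  have : 0 < O bb c (p x).
    by apply: E; rewrite exa; apply: bne; [exact: sh4n | exact: sh41n].
  move=> h2; lra.
have : 0 < O a bb (p x).
  by rewrite /a /bb -{2}(sh41 v); apply: E => //; rewrite sh41.
move=> h1; lra.
Qed.

Lemma h_pos2 v : 0 < h v (b (sh v 2)).
Proof.
by rewrite /h O_cyc -sh11; apply: E; rewrite ?sh11; apply: bne; shne.
Qed.

Lemma h_pos3 v : 0 < h v (b (sh v 3)).
Proof.
by rewrite /h O_cyc O_cyc -sh31; apply: E; rewrite ?sh31; apply: bne; shne.
Qed.

Lemma h_zero4 v : h v (b (sh v 4)) = 0. Proof. by rewrite /h O_aab. Qed.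
Lemma h_zero1 v : h v (b (sh v 1)) = 0. Proof. by rewrite /h O_abb. Qed.

Lemma Sep_edge k : Sep p (b k) (b (sh k 1)) [set b k; b (sh k 1)].
Proof.
move=> k' l' kl; rewrite !inE !negb_or => /andP[k1 k2] /andP[l1 l2] z h1 h2.
apply: (SL1 (A := p (b k)) (B := p (b (sh k 1))) _ _ _ _ h1 h2).
- exact: O_aab.
- exact: O_abb.
- exact: E.
- exact: E.
Qed.

Lemma mk_rescue (s t : seg n) i j X : i != j -> Sep p i j X ->
  [disjoint val s & X] -> [disjoint val t & X] ->
  forall W : {set seg n}, (forall w : seg n, val w = [set i; j] -> w \in W) ->
  exists2 w, w \in W & D_rel p s w /\ D_rel p w t.
Proof.
move=> ij hS ds dt W hW.
have [w ew] := mkseg ij.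
exists w; first exact: hW.
have [h1 _] := rescue ij ew hS ds.
have [_ h2] := rescue ij ew hS dt.
by split.
Qed.

Definition Bset := [set b k | k : 'I_5].

Lemma notB x k : x \notin Bset -> x != b k.
Proof. by move=> xB; apply/eqP => e; move: xB; rewrite e imset_f. Qed.

Lemma seg_classify (s : seg n) :
  (exists k l, k != l /\ val s = [set b k; b l]) \/
  (exists x y, [/\ x != y, val s = [set x; y] & x \notin Bset]).
Proof.
have [i [j [ij es]]] := seg_ends s.
case: (boolP (i \in Bset)) => [/imsetP[k _ eik]|iB]; last by right; exists i, j.
case: (boolP (j \in Bset)) => [/imsetP[l _ ejl]|jB]; last first.
  by right; exists j, i; split => //; [rewrite eq_sym | rewrite es setUC].
left; exists k, l; split; last by rewrite es eik ejl.
by apply/eqP => e; move: ij; rewrite eik ejl e eqxx.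
Qed.

Lemma preim y : exists k1, forall k, b k = y -> k = k1.
Proof.
case: (boolP (y \in Bset)) => [/imsetP[k0 _ ->]|yB].
  by exists k0 => k /binj.
exists (@Ordinal 5 0 isT) => k e; move: yB; by rewrite -e imset_f.
Qed.
Lemma disj22 (x y a c : 'I_n) : x != a -> x != c -> y != a -> y != c ->
  [disjoint [set x; y] & [set a; c]].
Proof.
move=> xa xc ya yc; rewrite -setI_eq0; apply/eqP/setP => z; rewrite !inE.
case: (eqVneq z x) => [->|_]; first by rewrite (negbTE xa) (negbTE xc).
case: (eqVneq z y) => [->|_] //; by rewrite (negbTE ya) (negbTE yc).
Qed.

Definition W_of (S : {set {set 'I_n}}) : {set seg n} := [set s : seg n | val s \in S].

Lemma W_card S : (#|W_of S| <= #|S|)%N.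
Proof.
rewrite -(card_imset _ val_inj); apply: subset_leq_card; apply/subsetP => x.
by case/imsetP => s; rewrite inE => hs ->.
Qed.

Lemma W_mem S (w : seg n) : (w \in W_of S) = (val w \in S).
Proof. by rewrite inE. Qed.

Definition S1 v : {set {set 'I_n}} :=
  [set [set b k; b (sh k 1)] | k : 'I_5] :|:
  [set [set b (sh u 4); b (sh u 1)] | u in [set u | u != v]].

Lemma S1_card v : (#|S1 v| <= 9)%N.
Proof.
rewrite /S1; apply: (leq_trans (leq_card_setU _ _)).
have -> : [set u | u != v] = [set~ v] by apply/setP => u; rewrite !inE.
have h1 : (#|[set [set b k; b (sh k 1)] | k : 'I_5]| <= 5)%N.
  apply: (leq_trans (leq_imset_card _ _)); by rewrite -cardsT cardsT card_ord.
have h2 := leq_imset_card (fun u : 'I_5 => [set b (sh u 4); b (sh u 1)]) [set~ v].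
rewrite cardsC1 card_ord /= in h2.
exact: (leq_add h1 h2).
Qed.

Lemma edge_in v k : [set b k; b (sh k 1)] \in S1 v.
Proof. by rewrite inE; apply/orP; left; apply/imsetP; exists k. Qed.

Lemma diag_in v u : u != v -> [set b (sh u 4); b (sh u 1)] \in S1 v.
Proof. by move=> uv; rewrite inE; apply/orP; right; apply/imsetP; exists u; rewrite // inE. Qed.

Lemma hullseg v (s : seg n) k l : k != l -> val s = [set b k; b l] ->
  s \notin W_of (S1 v) -> val s = [set b (sh v 4); b (sh v 1)].
Proof.
move=> kl es; rewrite W_mem es.
case/or4P: (sh_pair kl) => /eqP e.
- by rewrite e edge_in.
- by rewrite e setUC edge_in.
- case: (eqVneq (sh k 1) v) => [<-|kv].
    by rewrite e sh14 sh11.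
  have -> : [set b k; b l] = [set b (sh (sh k 1) 4); b (sh (sh k 1) 1)] by rewrite sh14 sh11 e.
  by rewrite diag_in.
- case: (eqVneq (sh l 1) v) => [<-|lv].
    by rewrite e sh14 sh11 setUC.
  have -> : [set b k; b l] = [set b (sh (sh l 1) 4); b (sh (sh l 1) 1)] by rewrite sh14 sh11 e setUC.
  by rewrite diag_in.
Qed.
Lemma D_sym_goal (W : {set seg n}) s t :
  (D_rel p t s \/ exists2 w, w \in W & D_rel p t w /\ D_rel p w s) ->
  (D_rel p s t \/ exists2 w, w \in W & D_rel p s w /\ D_rel p w t).
Proof.
case=> [h|[w wW [h1 h2]]]; first by left; apply: D_rel_sym.
by right; exists w => //; split; apply: D_rel_sym.
Qed.

Lemma bk_ne k : b k != b (sh k 1).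
Proof. by apply: bne; rewrite eq_sym sh1n. Qed.

Lemma edge_rescue (S : {set {set 'I_n}}) (s t : seg n) k :
  (forall k', [set b k'; b (sh k' 1)] \in S) ->
  [disjoint val s & [set b k; b (sh k 1)]] -> [disjoint val t & [set b k; b (sh k 1)]] ->
  exists2 w, w \in W_of S & D_rel p s w /\ D_rel p w t.
Proof.
move=> hS ds dt.
apply: (mk_rescue (@bk_ne k) (@Sep_edge k) ds dt) => w ew.
by rewrite W_mem ew hS.
Qed.

Lemma c1_nn (S : {set {set 'I_n}}) (s t : seg n) xs ys xt yt :
  (forall k', [set b k'; b (sh k' 1)] \in S) ->
  val s = [set xs; ys] -> xs \notin Bset -> val t = [set xt; yt] -> xt \notin Bset ->
  exists2 w, w \in W_of S & D_rel p s w /\ D_rel p w t.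
Proof.
move=> hS es xsB et xtB.
have [k1 hk1] := @preim ys; have [k2 hk2] := @preim yt.
have [k /and4P[kk1 kk2 k'k1 k'k2]] := @sh_avoid k1 k2.
have nb : forall y k0 kk, (forall k', b k' = y -> k' = k0) -> kk != k0 -> y != b kk.
  move=> y k0 kk hy hk; apply/eqP => e; move: hk; by rewrite (hy kk (esym e)) eqxx.
apply: (edge_rescue (k := k) hS).
  rewrite es; apply: disj22; [exact: notB | exact: notB | exact: (nb _ k1) | exact: (nb _ k1)].
rewrite et; apply: disj22; [exact: notB | exact: notB | exact: (nb _ k2) | exact: (nb _ k2)].
Qed.

Section Case1.
Variable v : 'I_5.
Hypothesis H1 : forall x, x \notin [set b (sh v 4); b v; b (sh v 1)] -> 0 < h v x.

Lemma c1_dn (s t : seg n) x y :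
  val s = [set b (sh v 4); b (sh v 1)] -> x != y -> val t = [set x; y] -> x \notin Bset ->
  D_rel p s t \/ exists2 w, w \in W_of (S1 v) & D_rel p s w /\ D_rel p w t.
Proof.
move=> es xy et xB.
case: (boolP (y \in [set b (sh v 4); b v; b (sh v 1)])) => hy.
  right; apply: (edge_rescue (k := sh v 2) (@edge_in v)); rewrite sh21.
    by rewrite es; apply: disj22; apply: bne; shne.
  rewrite et; apply: disj22; try exact: notB.
    by move: hy; rewrite !inE => /orP[/orP[/eqP->|/eqP->]|/eqP->]; apply: bne; shne.
  by move: hy; rewrite !inE => /orP[/orP[/eqP->|/eqP->]|/eqP->]; apply: bne; shne.
left.
have hne : b (sh v 4) != b (sh v 1) by apply: bne; shne.
apply: (adj_of hne es xy et) => z h1 h2.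
apply: (SL1 (A := p (b (sh v 4))) (B := p (b (sh v 1))) _ _ _ _ h1 h2).
- exact: O_aab.
- exact: O_abb.
- apply: H1; rewrite !inE; apply/negP => /orP[/orP[/eqP e|/eqP e]|/eqP e]; move: xB; by rewrite e imset_f.
- exact: H1.
Qed.

Lemma case1 : mv_set (D_rel p) (~: W_of (S1 v)).
Proof.
apply: mv_from => s t sW tW st.
have cl : forall s' : seg n, s' \notin W_of (S1 v) ->
    val s' = [set b (sh v 4); b (sh v 1)] \/
    exists x y, [/\ x != y, val s' = [set x; y] & x \notin Bset].
  move=> s' s'W; case: (seg_classify s') => [[k [l [kl e]]]|]; last by right.
  by left; apply: (hullseg kl e s'W).
case: (cl s sW) => [es|[xs [ys [xys es xsB]]]]; case: (cl t tW) => [et|[xt [yt [xyt et xtB]]]].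
- by move: st; rewrite (val_inj (etrans es (esym et))) eqxx.
- exact: (c1_dn es xyt et xtB).
- by apply: D_sym_goal; apply: (c1_dn et xys es xsB).
- by right; apply: (c1_nn (@edge_in v) es xsB et xtB).
Qed.

End Case1.
Lemma plucker (a c d e x : R * R) : 0 < O c d e -> 0 < O c d a -> 0 < O e a c ->
  0 < O c d x -> O a c x < 0 -> O c e x < 0 -> False.
Proof.
move=> h1 h2 h3 h4 h5 h6.
have id : O c d e * O c a x = O c x e * O c a d + O c d x * O c a e by rewrite /O; ring.
have e1 : O c a x = - O a c x by rewrite /O; ring.
have e2 : O c x e = - O c e x by rewrite /O; ring.
have e3 : O c a d = - O c d a by rewrite /O; ring.
have e4 : O c a e = - O e a c by rewrite /O; ring.
rewrite e1 e2 e3 e4 in id.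
have l : 0 < O c d e * - O a c x by apply: mulr_gt0; lra.
have r1 : 0 < - O c e x * O c d a by apply: mulr_gt0; lra.
have r2 : 0 < O c d x * O e a c by apply: mulr_gt0; lra.
have : - O c e x * - O c d a + O c d x * - O e a c < 0.
  rewrite !mulrN; lra.
lra.
Qed.

Lemma ex_min (P : pred 'I_n) (F : 'I_n -> R) i0 : P i0 ->
  exists m, P m /\ forall x, P x -> F m <= F x.
Proof.
move=> Pi0; case: (@arg_minP _ _ _ i0 P F Pi0) => m Pm Hm.
by exists m; split.
Qed.

Lemma disj_of (A T : {set 'I_n}) x y : A \subset T -> x \notin T -> y \notin T ->
  [disjoint A & [set x; y]].
Proof.
move=> AT xT yT; rewrite -setI_eq0; apply/eqP/setP => z; rewrite !inE.
apply/negP => /andP[zA /orP[]/eqP ez]; move: (subsetP AT z zA); by rewrite ez ?(negbTE xT) ?(negbTE yT).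
Qed.

Section Case2.
Hypothesis H2 : forall v, exists x, x \notin [set b (sh v 4); b v; b (sh v 1)] /\ h v x <= 0.

Lemma q_ex : exists q : 'I_5 -> 'I_n, forall v,
  [/\ q v != b v, h v (q v) < 0 & forall x, x != b v -> h v (q v) <= h v x].
Proof.
apply: (@fin_all_exists _ (fun=> 'I_n) (fun v (qv : 'I_n) => [/\ qv != b v, h v qv < 0 & forall x, x != b v -> h v qv <= h v x])) => v.
have [x0 [hx0 hx0']] := H2 v.
move: hx0; rewrite !inE !negb_or => /andP[/andP[x1 x2] x3].
have [m [Pm Hm]] := @ex_min (fun x => x != b v) (h v) x0 x2.
exists m; split => //.
have hne : h v x0 != 0.
  apply: gpO; [by apply: bne; shne | by rewrite eq_sym | by rewrite eq_sym].
have := Hm x0 x2; rewrite le_eqVlt in hx0'; move: hx0'; rewrite (negbTE hne) /=.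
move=> h1 h2; exact: (le_lt_trans h2 h1).
Qed.

Variable q : 'I_5 -> 'I_n.
Hypothesis qP : forall v,
  [/\ q v != b v, h v (q v) < 0 & forall x, x != b v -> h v (q v) <= h v x].

Lemma qB v k : q v != b k.
Proof.
have [h1 h2 h3] := qP v.
apply/eqP => e; case/orP: (sh_all k v) => [|/orP[|/orP[|/orP[]]]] /eqP ek; rewrite ek in e.
- by move: h2; rewrite e h_zero4 ltxx.
- by rewrite e eqxx in h1.
- by move: h2; rewrite e h_zero1 ltxx.
- by move: h2; rewrite e => /(lt_trans (h_pos2 v)); rewrite ltxx.
- by move: h2; rewrite e => /(lt_trans (h_pos3 v)); rewrite ltxx.
Qed.

Lemma qnotB v : q v \notin Bset.
Proof. by apply/imsetP => -[k _ e]; move: (qB v k); rewrite e eqxx. Qed.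

Lemma q2 v : q v != q (sh v 2).
Proof.
apply/eqP => e.
have [_ hv _] := qP v; have [_ hv2 _] := qP (sh v 2).
rewrite -e /h sh24 sh21 in hv2.
apply: (plucker (a := p (b (sh v 4))) (c := p (b (sh v 1))) (d := p (b (sh v 2)))
  (e := p (b (sh v 3))) (x := p (q v))).
- rewrite -sh11; apply: E; rewrite ?sh11; apply: bne; shne.
- rewrite -sh11; apply: E; rewrite ?sh11; apply: bne; shne.
- rewrite -sh31; apply: E; rewrite ?sh31; apply: bne; shne.
- by rewrite -sh11; apply: E; apply: qB.
- exact: hv.
- exact: hv2.
Qed.

Lemma qa_ex : exists a, q a != q (sh a 1).
Proof.
case: (boolP [exists a, q a != q (sh a 1)]) => [/existsP //|/existsPn H].
have e : forall a, q a = q (sh a 1) by move=> a; apply/eqP; move: (H a); rewrite negbK.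
have := q2 (@Ordinal 5 0 isT); rewrite e (e (sh _ 1)) sh11 eqxx //.
Qed.

Variable a : 'I_5.
Hypothesis qa : q a != q (sh a 1).

Definition S2 : {set {set 'I_n}} :=
  [set [set b k; b (sh k 1)] | k in [set k | k != a]] :|: [set [set b u; q u] | u : 'I_5].

Lemma S2_card : (#|S2| <= 9)%N.
Proof.
rewrite /S2; apply: (leq_trans (leq_card_setU _ _)).
have -> : [set k | k != a] = [set~ a] by apply/setP => u; rewrite !inE.
have h1 : (#|[set [set b u; q u] | u : 'I_5]| <= 5)%N.
  apply: (leq_trans (leq_imset_card _ _)); by rewrite -cardsT cardsT card_ord.
have h2 := leq_imset_card (fun k : 'I_5 => [set b k; b (sh k 1)]) [set~ a].
rewrite cardsC1 card_ord /= in h2.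
exact: (leq_add h2 h1).
Qed.

Lemma cover (T : {set 'I_n}) : (#|T| <= 4)%N ->
  (exists k, [&& k != a, b k \notin T & b (sh k 1) \notin T]) \/
  (exists u, (b u \notin T) && (q u \notin T)).
Proof.
move=> hT.
case: (boolP [exists k, [&& k != a, b k \notin T & b (sh k 1) \notin T]]) =>
  [/existsP ?|/existsPn He]; first by left.
case: (boolP [exists u, (b u \notin T) && (q u \notin T)]) =>
  [/existsP ?|/existsPn Hf]; first by right.
exfalso.
pose M := [set u | b u \notin T].
have qM : forall u, u \in M -> q u \in T.
  move=> u; rewrite inE => uM; move: (Hf u); by rewrite uM /= negbK.
have injq : {in M &, injective q}.
  move=> u w uM wM e; apply/eqP; apply/negPn/negP => uw.
  move: (uM) (wM); rewrite !inE => uT wT.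
  case/or4P: (sh_pair uw) => /eqP ew.
  - move: (He u); rewrite uT -ew wT /= andbT negbK => /eqP ua.
    by move: qa; rewrite -ua -ew e eqxx.
  - move: (He w); rewrite wT -ew uT /= andbT negbK => /eqP wa.
    by move: qa; rewrite -wa -ew e eqxx.
  - by move: (q2 u); rewrite -ew e eqxx.
  - by move: (q2 w); rewrite -ew e eqxx.
have sub : (b @: ~: M) :|: (q @: M) \subset T.
  apply/subsetP => x; rewrite inE => /orP[/imsetP[k kM ->]|/imsetP[u uM ->]].
    by move: kM; rewrite !inE negbK.
  exact: qM.
have disj : [disjoint b @: ~: M & q @: M].
  rewrite -setI_eq0; apply/eqP/setP => x; rewrite !inE.
  apply/negP => /andP[/imsetP[k _ ->] /imsetP[u _ e]].
  by move: (qB u k); rewrite e eqxx.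
have := subset_leq_card sub.
rewrite cardsU (disjoint_setI0 disj) cards0 subn0 (card_imset _ binj) (card_in_imset injq).
rewrite addnC cardsC card_ord => h5.
by move: (leq_trans h5 hT).
Qed.

Lemma Sep_fan u : Sep p (b u) (q u) [set b u; q u].
Proof.
have [h1 h2 h3] := qP u.
move=> k' l' kl; rewrite !inE !negb_or => /andP[k1 k2] /andP[l1 l2] z z1 z2.
apply: (SL2 (A := p (b (sh u 4))) (B := p (b (sh u 1))) _ _ _ _ z1 z2).
- exact: hv_min.
- exact: h3.
- exact: h3.
- apply: gpO => //; by rewrite eq_sym.
Qed.

Lemma edge_in2 k : k != a -> [set b k; b (sh k 1)] \in S2.
Proof. by move=> ka; rewrite inE; apply/orP; left; apply/imsetP; exists k; rewrite ?inE. Qed.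

Lemma fan_in2 u : [set b u; q u] \in S2.
Proof. by rewrite inE; apply/orP; right; apply/imsetP; exists u. Qed.

Lemma case2 : mv_set (D_rel p) (~: W_of S2).
Proof.
apply: mv_from => s t _ _ _; right.
pose T := val s :|: val t.
have hT : (#|T| <= 4)%N.
  apply: (leq_trans (leq_card_setU _ _)).
  by rewrite (eqP (valP s)) (eqP (valP t)).
have sT : val s \subset T by apply: subsetUl.
have tT : val t \subset T by apply: subsetUr.
case: (cover hT) => [[k /and3P[ka bk bk1]]|[u /andP[bu qu]]].
  apply: (mk_rescue (@bk_ne k) (@Sep_edge k) (disj_of sT bk bk1) (disj_of tT bk bk1)).
  by move=> w ew; rewrite W_mem ew edge_in2.
have ne : b u != q u by rewrite eq_sym qB.
apply: (mk_rescue ne (@Sep_fan u) (disj_of sT bu qu) (disj_of tT bu qu)).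
by move=> w ew; rewrite W_mem ew fan_in2.
Qed.

End Case2.
Lemma main_hull : exists W : {set seg n}, (#|W| <= 9)%N /\ mv_set (D_rel p) (~: W).
Proof.
case: (boolP [exists v, [forall x, (x \notin [set b (sh v 4); b v; b (sh v 1)]) ==> (0 < h v x)]])
  => [/existsP[v /forallP Hv]|/existsPn Hn].
  exists (W_of (S1 v)); split; first exact: leq_trans (W_card _) (S1_card v).
  by apply: case1 => x hx; exact: (implyP (Hv x) hx).
have H2 : forall v, exists x, x \notin [set b (sh v 4); b v; b (sh v 1)] /\ h v x <= 0.
  move=> v; move: (Hn v) => /forallPn[x]; rewrite negb_imply => /andP[hx nh].
  by exists x; split => //; rewrite leNgt.
have [q qP] := q_ex H2.
have [a qa] := qa_ex qP.
exists (W_of (S2 q a)); split; first exact: leq_trans (W_card _) (S2_card q a).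
exact: case2.
Qed.

End Main.
Section Hull.
Variable R : realType.
Variable n : nat.
Variable p : 'I_n -> R * R.

Lemma sum_delta (j : 'I_n) (f : 'I_n -> R) : \sum_i (i == j)%:R * f i = f j.
Proof.
rewrite (bigD1 j) //= eqxx mul1r big1 ?addr0 // => i /negbTE ->; by rewrite mul0r.
Qed.

Lemma in_hull_pt j : in_hull p (p j).
Proof.
exists (fun i => (i == j)%:R); split; first by move=> i; rewrite ler0n.
split.
  rewrite (eq_bigr (fun i => (i == j)%:R * 1)) ?sum_delta // => i _; by rewrite mulr1.
by rewrite !sum_delta; case: (p j).
Qed.

Lemma hull_O_ge0 (a c y : R * R) : (forall k, 0 <= O a c (p k)) -> in_hull p y -> 0 <= O a c y.
Proof.
move=> hk [w [w0 [w1 ->]]].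
have -> : O a c (\sum_i w i * (p i).1, \sum_i w i * (p i).2) = \sum_i w i * O a c (p i).
  rewrite /O /=.
  have e : forall i, w i * ((c.1 - a.1) * ((p i).2 - a.2) - (c.2 - a.2) * ((p i).1 - a.1)) =
     (c.1 - a.1) * (w i * (p i).2) - (c.2 - a.2) * (w i * (p i).1)
     + (- (c.1 - a.1) * a.2 + (c.2 - a.2) * a.1) * w i.
    by move=> i; ring.
  rewrite (eq_bigr _ (fun i _ => e i)) big_split /= sumrB.
  have s1 : \sum_i (c.1 - a.1) * (w i * (p i).2) = (c.1 - a.1) * \sum_i w i * (p i).2
    by rewrite mulr_sumr.
  have s2 : \sum_i (c.2 - a.2) * (w i * (p i).1) = (c.2 - a.2) * \sum_i w i * (p i).1
    by rewrite mulr_sumr.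
  have s3 : \sum_i (- (c.1 - a.1) * a.2 + (c.2 - a.2) * a.1) * w i =
      (- (c.1 - a.1) * a.2 + (c.2 - a.2) * a.1) * \sum_i w i by rewrite mulr_sumr.
  rewrite s1 s2 s3 w1.
  ring.
by apply: sumr_ge0 => i _; apply: mulr_ge0.
Qed.

Lemma sqr_pos (u v : R) : (u != 0) || (v != 0) -> 0 < u ^+ 2 + v ^+ 2.
Proof.
case/orP => h.
  have : 0 < u ^+ 2 by rewrite exprn_even_gt0.
  have : 0 <= v ^+ 2 by apply: sqr_ge0.
  lra.
have : 0 < v ^+ 2 by rewrite exprn_even_gt0.
have : 0 <= u ^+ 2 by apply: sqr_ge0.
lra.
Qed.

Lemma boundary_of_line (a c : R * R) i : a != c -> (forall k, 0 <= O a c (p k)) ->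
  O a c (p i) = 0 -> on_hull_boundary p (p i).
Proof.
move=> ac hk hi; split; first exact: in_hull_pt.
move=> eps eps0.
set L := (c.1 - a.1) ^+ 2 + (c.2 - a.2) ^+ 2.
have L0 : 0 < L.
  apply: sqr_pos; rewrite -negb_and; apply/negP => /andP[/eqP e1 /eqP e2].
  move: ac; case: (a) e1 e2 => a1 a2; case: (c) => c1 c2 /= e1 e2.
  have -> : c1 = a1 by lra.
  have -> : c2 = a2 by lra.
  by rewrite eqxx.
set t := eps / (1 + L).
have t0 : 0 < t by apply: divr_gt0 => //; lra.
have et : eps = t * (1 + L) by rewrite /t mulrVK // unitfE; lra.
exists ((p i).1 + t * (c.2 - a.2), (p i).2 - t * (c.1 - a.1)); split.
  rewrite /= et.
  have -> : ((p i).1 + t * (c.2 - a.2) - (p i).1) ^+ 2 + ((p i).2 - t * (c.1 - a.1) - (p i).2) ^+ 2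
     = t ^+ 2 * L by rewrite /L; ring.
  have -> : (t * (1 + L)) ^+ 2 = t ^+ 2 * L + t ^+ 2 * (1 + L + L ^+ 2) by ring.
  rewrite ltrDl; apply: mulr_gt0; first exact: exprn_gt0.
  have : 0 <= L ^+ 2 by apply: sqr_ge0.
  lra.
move=> hin; have := hull_O_ge0 hk hin.
have -> : O a c ((p i).1 + t * (c.2 - a.2), (p i).2 - t * (c.1 - a.1)) = O a c (p i) - t * L.
  by rewrite /O /L /=; ring.
rewrite hi sub0r oppr_ge0 => h.
have : 0 < t * L by apply: mulr_gt0.
lra.
Qed.


Lemma abs_sq (d f e : R) : 0 < e -> d ^+ 2 + f ^+ 2 < e ^+ 2 -> `|d| <= e.
Proof. move=> he h; rewrite ler_norml; apply/andP; split; nra. Qed.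

Lemma O_near (P Q x y : R * R) (e : R) : 0 < e -> `|y.1 - x.1| <= e -> `|y.2 - x.2| <= e ->
  (1 + `|Q.1 - P.1| + `|Q.2 - P.2|) * e <= O P Q x -> 0 < O P Q y.
Proof.
move=> e0 h1 h2 h.
have -> : O P Q y = O P Q x + ((Q.1 - P.1) * (y.2 - x.2) - (Q.2 - P.2) * (y.1 - x.1)) by rewrite /O; ring.
have l1 : - (`|Q.1 - P.1| * e) <= (Q.1 - P.1) * (y.2 - x.2).
  have : `|(Q.1 - P.1) * (y.2 - x.2)| <= `|Q.1 - P.1| * e.
    by rewrite normrM; apply: ler_wpM2l.
  by rewrite ler_norml => /andP[].
have l2 : (Q.2 - P.2) * (y.1 - x.1) <= `|Q.2 - P.2| * e.
  have : `|(Q.2 - P.2) * (y.1 - x.1)| <= `|Q.2 - P.2| * e.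
    by rewrite normrM; apply: ler_wpM2l.
  by rewrite ler_norml => /andP[].
have : (1 + `|Q.1 - P.1| + `|Q.2 - P.2|) * e = e + `|Q.1 - P.1| * e + `|Q.2 - P.2| * e by ring.
lra.
Qed.

Lemma ball (ia ic id : 'I_n) x :
  0 < O (p ia) (p ic) x -> 0 < O (p ic) (p id) x -> 0 < O (p id) (p ia) x ->
  ~ on_hull_boundary p x.
Proof.
set A := p ia; set C := p ic; set D := p id => h1 h2 h3 [_ hb].
pose K := 1 + `|C.1 - A.1| + `|C.2 - A.2| + `|D.1 - C.1| + `|D.2 - C.2|
  + `|A.1 - D.1| + `|A.2 - D.2|.
pose m := Num.min (O A C x) (Num.min (O C D x) (O D A x)).
have K1 : 1 <= K by rewrite /K; have := normr_ge0 (C.1 - A.1); have := normr_ge0 (C.2 - A.2);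
  have := normr_ge0 (D.1 - C.1); have := normr_ge0 (D.2 - C.2);
  have := normr_ge0 (A.1 - D.1); have := normr_ge0 (A.2 - D.2); lra.
have m0 : 0 < m by rewrite /m !lt_min h1 h2 h3.
have mA : m <= O A C x by rewrite /m !ge_min lexx.
have mC : m <= O C D x by rewrite /m !ge_min lexx orbT.
have mD : m <= O D A x by rewrite /m !ge_min lexx !orbT.
pose e := m / K.
have e0 : 0 < e by apply: divr_gt0 => //; lra.
have Ke : K * e = m by rewrite /e mulrC mulrVK // unitfE; lra.
have [y [hy nin]] := hb e e0.
have d1 : `|y.1 - x.1| <= e by exact: (abs_sq e0 hy).
have hy' : (y.2 - x.2) ^+ 2 + (y.1 - x.1) ^+ 2 < e ^+ 2 by rewrite addrC.
have d2 : `|y.2 - x.2| <= e by exact: (abs_sq e0 hy').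
have nA := normr_ge0 (C.1 - A.1); have nB := normr_ge0 (C.2 - A.2).
have nC := normr_ge0 (D.1 - C.1); have nD := normr_ge0 (D.2 - C.2).
have nE := normr_ge0 (A.1 - D.1); have nF := normr_ge0 (A.2 - D.2).
have g1 : 0 < O A C y.
  apply: (O_near e0 d1 d2); apply: (le_trans _ mA); rewrite -Ke.
  apply: ler_wpM2r; [exact: ltW | rewrite /K; lra].
have g2 : 0 < O C D y.
  apply: (O_near e0 d1 d2); apply: (le_trans _ mC); rewrite -Ke.
  apply: ler_wpM2r; [exact: ltW | rewrite /K; lra].
have g3 : 0 < O D A y.
  apply: (O_near e0 d1 d2); apply: (le_trans _ mD); rewrite -Ke.
  apply: ler_wpM2r; [exact: ltW | rewrite /K; lra].
apply: nin.
pose Dl := O C D y + O D A y + O A C y.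
have Dl0 : 0 < Dl by rewrite /Dl; lra.
have Dln : Dl != 0 by rewrite gt_eqF.
pose al := O C D y / Dl; pose be := O D A y / Dl; pose ga := O A C y / Dl.
exists (fun i => (i == ia)%:R * al + (i == ic)%:R * be + (i == id)%:R * ga).
have sum3 : forall f : 'I_n -> R, \sum_i ((i == ia)%:R * al + (i == ic)%:R * be + (i == id)%:R * ga) * f i
    = al * f ia + be * f ic + ga * f id.
  move=> f.
  rewrite (eq_bigr (fun i => (i == ia)%:R * (al * f i) + (i == ic)%:R * (be * f i) + (i == id)%:R * (ga * f i))); last by move=> i _; ring.
  by rewrite !big_split /= !sum_delta.
split.
  move=> i; apply: addr_ge0; first apply: addr_ge0; apply: mulr_ge0; rewrite ?ler0n //;
    apply: divr_ge0; by [apply: ltW | apply: ltW].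
split.
  rewrite (eq_bigr (fun i => ((i == ia)%:R * al + (i == ic)%:R * be + (i == id)%:R * ga) * (fun=> 1) i)); last by move=> i _; rewrite mulr1.
  by rewrite sum3 !mulr1 /al /be /ga -!mulrDl divff.
rewrite !sum3 -/A -/C -/D /al /be /ga.
move: Dln; rewrite /Dl /O => Dln.
rewrite [y in LHS]surjective_pairing /O; congr (_, _); field => //.
Qed.
Hypothesis gp : general_position p.

Lemma gpO' i j k : i != j -> j != k -> i != k -> O (p i) (p j) (p k) != 0.
Proof. by move=> ij jk ik; apply/eqP => h; apply: (gp ij jk ik). Qed.

Definition Edge i j : bool :=
  (j != i) && [forall x, ((x != i) && (x != j)) ==> (0 < O (p i) (p j) (p x))].

Lemma wrap i : on_hull_boundary p (p i) -> (exists j, j != i) -> exists j, Edge i j.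
Proof.
move=> hb [j0 j0i].
pose lt y z := 0 < O (p i) (p y) (p z).
pose cnt j := #|[set y | (y != i) && lt y j]|.
case: (@arg_minnP _ j0 (fun j => j != i) cnt j0i) => j ji jmin.
exists j; rewrite /Edge ji /=; apply/forallP => x; apply/implyP => /andP[xi xj].
have hne : O (p i) (p j) (p x) != 0 by apply: gpO' => //; rewrite eq_sym.
rewrite lt_neqAle eq_sym hne /=; rewrite leNgt; apply/negP => hneg.
have ltxj : lt x j by rewrite /lt O_swap2 oppr_gt0.
have : (cnt x < cnt j)%N.
  apply: proper_card; apply/properP; split.
    apply/subsetP => y; rewrite !inE => /andP[yi lyx]; rewrite yi /=.
    have yj : y != j.
      by apply/eqP => e; move: lyx; rewrite /lt e => h; move: (lt_trans hneg h); rewrite ltxx.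
    have yx : y != x by apply/eqP => e; move: lyx; rewrite /lt e O_abb ltxx.
    have hne' : O (p i) (p y) (p j) != 0 by apply: gpO' => //; rewrite eq_sym.
    rewrite /lt lt_neqAle eq_sym hne' /= leNgt; apply/negP => hn2.
    apply: (@ball j y x (p i)).
    - by rewrite -O_cyc O_swap2 oppr_gt0.
    - by rewrite -O_cyc.
    - by rewrite -O_cyc.
    - exact: hb.
  exists x; first by rewrite inE xi ltxj.
  by rewrite inE /lt O_abb ltxx andbF.
by rewrite ltnNge jmin.
Qed.
End Hull.
Section Cyc.
Variable T : finType.
Variable B : {set T}.
Variable s : T -> T.
Hypothesis sB : forall i, i \in B -> s i \in B.
Hypothesis sinj : {in B &, injective s}.
Hypothesis sfix : forall i, i \in B -> s i != i.
Hypothesis s2 : forall i, i \in B -> s (s i) != i.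

Lemma closed_small (Y : {set T}) : Y \subset B -> (forall d, d \in Y -> s d \in Y) ->
  #|Y| = 1%N \/ #|Y| = 2 -> False.
Proof.
move=> YB cl [/eqP/cards1P[d eY]|/eqP/cards2P[d [d' [dd' eY]]]].
  have dY : d \in Y by rewrite eY inE.
  have := cl d dY; rewrite eY inE => /eqP e.
  by move: (sfix (subsetP YB d dY)); rewrite e eqxx.
have dY : d \in Y by rewrite eY !inE eqxx.
have d'Y : d' \in Y by rewrite eY !inE eqxx orbT.
have sd : s d = d'.
  have := cl d dY; rewrite eY !inE => /orP[/eqP e|/eqP //].
  by move: (sfix (subsetP YB d dY)); rewrite e eqxx.
have sd' : s d' = d.
  have := cl d' d'Y; rewrite eY !inE => /orP[/eqP //|/eqP e].
  by move: (sfix (subsetP YB d' d'Y)); rewrite e eqxx.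
by move: (s2 (subsetP YB d dY)); rewrite sd sd' eqxx.
Qed.

Variable b0 : T.
Hypothesis b0B : b0 \in B.
Hypothesis B5 : #|B| = 5.

Let c k := iter k s b0.
Lemma cB k : c k \in B.
Proof. by elim: k => [|k IH] //=; apply: sB. Qed.
Lemma cS k : c k.+1 = s (c k). Proof. by []. Qed.

Lemma cinj k l : c k.+1 = c l.+1 -> c k = c l.
Proof. rewrite !cS; exact: sinj (cB k) (cB l). Qed.

Lemma cfix k : c k.+1 != c k. Proof. by rewrite cS sfix // cB. Qed.
Lemma c2 k : c k.+2 != c k. Proof. by rewrite !cS s2 // cB. Qed.

Lemma rest_closed (L : seq T) : (forall d, d \in B -> d \notin L -> s d \notin L) ->
  forall d, d \in B :\: [set x in L] -> s d \in B :\: [set x in L].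
Proof.
move=> H d; rewrite !inE => /andP[dL dB]; rewrite sB // andbT.
exact: H.
Qed.

Lemma card_rest (L : seq T) : uniq L -> {subset L <= B} ->
  #|B :\: [set x in L]| = (5 - size L)%N.
Proof.
move=> uL LB.
rewrite cardsD B5 (_ : B :&: [set x in L] = [set x in L]); last first.
  by apply/setIidPr; apply/subsetP => x; rewrite inE; exact: LB.
by rewrite cardsE (card_uniqP uL).
Qed.

Lemma uniq3 (a b d : T) : a != b -> a != d -> b != d -> uniq [:: a; b; d].
Proof. by move=> *; rewrite /= !inE !negb_or ?andbT; repeat (apply/andP; split). Qed.
Lemma uniq4 (a b d e : T) : a != b -> a != d -> a != e -> b != d -> b != e -> d != e ->
  uniq [:: a; b; d; e].
Proof. by move=> *; rewrite /= !inE !negb_or ?andbT; repeat (apply/andP; split). Qed.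
Lemma uniq5 (a b d e f : T) : a != b -> a != d -> a != e -> a != f -> b != d -> b != e ->
  b != f -> d != e -> d != f -> e != f -> uniq [:: a; b; d; e; f].
Proof.
by move=> *; rewrite /= !inE !negb_or ?andbT; repeat (apply/andP; split).
Qed.

Lemma c3 : c 3 != c 0.
Proof.
apply/eqP => e3.
apply: (closed_small (Y := B :\: [set x in [:: c 0; c 1; c 2]])).
- by apply: subsetDl.
- apply: rest_closed => d dB; rewrite !inE => /norP[d0 /norP[d1 d2]].
  apply/negP => /orP[/eqP e|/orP[/eqP e|/eqP e]].
  + have ed : d = c 2 by apply: (sinj dB (cB 2)); rewrite e -e3.
    by rewrite ed eqxx in d2.
  + have ed : d = c 0 by apply: (sinj dB (cB 0)); rewrite e.
    by rewrite ed eqxx in d0.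
  + have ed : d = c 1 by apply: (sinj dB (cB 1)); rewrite e.
    by rewrite ed eqxx in d1.
- right; rewrite card_rest //.
    by apply: uniq3; rewrite eq_sym ?cfix ?c2.
  by move=> x; rewrite !inE => /orP[/eqP->|/orP[/eqP->|/eqP->]]; exact: cB.
Qed.

Lemma c4 : c 4 != c 0.
Proof.
apply/eqP => e4.
have c31 : c 3 != c 1 by apply: c2.
have c30 := c3.
have c41 : c 4 != c 1 by apply/eqP => /cinj e; move: c3; rewrite e eqxx.
apply: (closed_small (Y := B :\: [set x in [:: c 0; c 1; c 2; c 3]])).
- by apply: subsetDl.
- apply: rest_closed => d dB; rewrite !inE => /norP[d0 /norP[d1 /norP[d2 d3]]].
  apply/negP => /orP[/eqP e|/orP[/eqP e|/orP[/eqP e|/eqP e]]].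
  + have ed : d = c 3 by apply: (sinj dB (cB 3)); rewrite e -e4.
    by rewrite ed eqxx in d3.
  + have ed : d = c 0 by apply: (sinj dB (cB 0)); rewrite e.
    by rewrite ed eqxx in d0.
  + have ed : d = c 1 by apply: (sinj dB (cB 1)); rewrite e.
    by rewrite ed eqxx in d1.
  + have ed : d = c 2 by apply: (sinj dB (cB 2)); rewrite e.
    by rewrite ed eqxx in d2.
- left; rewrite card_rest //.
    by apply: uniq4; rewrite eq_sym ?cfix ?c2.
  by move=> x; rewrite !inE => /orP[/eqP->|/orP[/eqP->|/orP[/eqP->|/eqP->]]]; exact: cB.
Qed.

Lemma cuniq : uniq [:: c 0; c 1; c 2; c 3; c 4].
Proof.
have c41 : c 4 != c 1 by apply/eqP => /cinj e; move: c3; rewrite e eqxx.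
by apply: uniq5; rewrite eq_sym ?cfix ?c2 ?c3 ?c4.
Qed.

Lemma c5 : c 5 = c 0.
Proof.
have eB : [set x in [:: c 0; c 1; c 2; c 3; c 4]] = B.
  apply/eqP; rewrite eqEcard; apply/andP; split.
    by apply/subsetP => x; rewrite !inE => /orP[/eqP->|/orP[/eqP->|/orP[/eqP->|/orP[/eqP->|/eqP->]]]]; exact: cB.
  by rewrite B5 cardsE (card_uniqP cuniq).
have : c 5 \in B by apply: cB.
rewrite -eB !inE => /orP[/eqP //|/orP[/eqP e|/orP[/eqP e|/orP[/eqP e|/eqP e]]]].
- by move: c4; rewrite (cinj e) eqxx.
- by move: c3; rewrite (cinj (cinj e)) eqxx.
- by move: (c2 3); rewrite e eqxx.
- by move: (cfix 4); rewrite e eqxx.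
Qed.

End Cyc.
Lemma card_seg n : #|{: seg n}| = 'C(n, 2).
Proof.
rewrite card_sig.
have := card_draws 'I_n 2; rewrite card_ord => <-.
by apply: eq_card => A; rewrite !inE.
Qed.

Theorem lemma14 (R : realType) (n : nat) (p : 'I_n -> R * R) :
  (5 <= n)%N ->
  injective p ->
  general_position p ->
  (exists B : {set 'I_n}, #|B| = 5%N /\ forall i, i \in B <-> on_hull_boundary p (p i)) ->
  ('C(n, 2) - 9 <= mu (D_rel p))%N.
Proof.
move=> n5 pinj gp [B [B5 HB]].
have n0 : (0 < n)%N by apply: leq_trans n5.
have n1 : (1 < n)%N by apply: leq_trans n5.
have n2 : (2 < n)%N by apply: leq_trans n5.
pose i0 := Ordinal n0; pose i1 := Ordinal n1; pose i2 := Ordinal n2.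
have ex2 : forall i : 'I_n, exists j, j != i.
  move=> i; case: (eqVneq i i0) => [->|h]; last by exists i0; rewrite eq_sym.
  by exists i1.
have ex3 : forall i j : 'I_n, exists x, (x != i) && (x != j).
  move=> i j.
  have : (0 < #|~: [set i; j]|)%N.
    have h2 : (#|[set i; j]| <= 2)%N by rewrite cards2; case: (i != j).
    have := cardsC [set i; j]; rewrite card_ord => e.
    rewrite ltnNge leqn0; apply/negP => /eqP h0; rewrite h0 addn0 in e.
    by move: h2; rewrite e => h; move: (leq_trans n5 h).
  rewrite card_gt0 => /set0Pn[x]; rewrite !inE negb_or => hx.
  by exists x.
have hs : forall i : 'I_n, exists j : 'I_n, (i \in B) ==> Edge p i j.
  move=> i; case: (boolP (i \in B)) => iB; last by exists i.
  have [j hj] := wrap gp ((HB i).1 iB) (ex2 i).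
  by exists j.
have [s sP] := @fin_all_exists _ (fun=> 'I_n) (fun i j => (i \in B) ==> Edge p i j) hs.
have sE : forall i, i \in B -> Edge p i (s i) by move=> i iB; exact: (implyP (sP i) iB).
have sfix : forall i, i \in B -> s i != i by move=> i /sE /andP[].
have sO : forall i x, i \in B -> x != i -> x != s i -> 0 < O (p i) (p (s i)) (p x).
  move=> i x iB xi xs; move/sE: iB => /andP[_ /forallP H].
  by apply: (implyP (H x)); rewrite xi xs.
have sB : forall i, i \in B -> s i \in B.
  move=> i iB; apply/HB; apply: (boundary_of_line (a := p i) (c := p (s i))).
  - by rewrite (inj_eq pinj) eq_sym sfix.
  - move=> k; case: (eqVneq k i) => [->|ki]; first by rewrite O_aab.
    case: (eqVneq k (s i)) => [->|ks]; first by rewrite O_abb.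
    exact/ltW/sO.
  - exact: O_abb.
have sinj : {in B &, injective s}.
  move=> i i' iB i'B e; apply/eqP; apply/negPn/negP => ii'.
  have h1 : 0 < O (p i) (p (s i)) (p i') by apply: sO => //; [rewrite eq_sym | rewrite e eq_sym sfix].
  have h2 : 0 < O (p i') (p (s i')) (p i) by apply: sO => //; rewrite -e eq_sym sfix.
  move: h2; rewrite -e O_cyc O_swap oppr_gt0 => h2.
  by move: (lt_trans h1 h2); rewrite ltxx.
have s2 : forall i, i \in B -> s (s i) != i.
  move=> i iB; apply/eqP => e.
  have [x /andP[xi xs]] := ex3 i (s i).
  have h1 := sO i x iB xi xs.
  have h2 : 0 < O (p (s i)) (p (s (s i))) (p x) by apply: sO => //; [exact: sB | rewrite e].
  move: h2; rewrite e O_swap oppr_gt0 => h2.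
  by move: (lt_trans h1 h2); rewrite ltxx.
have [b0 b0B] : exists b0, b0 \in B by apply/set0Pn; rewrite -card_gt0 B5.
pose b := fun k : 'I_5 => iter k s b0.
have cu := cuniq sB sinj sfix s2 b0B B5.
move: cu; set L := (X in uniq X) => cu.
have bnth : forall k : 'I_5, b k = nth b0 L k by move=> k; c5 k.
have binj : injective b.
  move=> k l e; apply/val_inj/eqP.
  rewrite -(@nth_uniq _ b0 L k l (ltn_ord k) (ltn_ord l) cu).
  change (nth b0 L k == nth b0 L l); by rewrite -!bnth e.
have bS : forall k, b (sh k 1) = s (b k).
  move=> k; have e5 := c5 sB sinj sfix s2 b0B B5; simpl in e5.
  c5 k; rewrite /b /= ?e5 //.
have E : forall k x, x != b k -> x != b (sh k 1) -> 0 < O (p (b k)) (p (b (sh k 1))) (p x).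
  move=> k x h1 h2; rewrite bS; apply: sO => //; last by rewrite -bS.
  exact: cB.
have [W [W9 mvW]] := main_hull gp binj E.
have := mu_ge mvW; rewrite card_seg => h.
apply: leq_trans h; exact: leq_sub2l.
Qed.
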